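(* Let $K:X\times X\to\mathbb{C}$ be positive definite and assume $\delta_x\in\mathscr{H}(K)$ for all $x\in X$. Let $F\subset X$ be a nonempty finite subset, $K_F=(K(x,y))_{x,y\in F}$, and let $\lambda$ be any eigenvalue of $K_F$. Then $1\le\lambda\sum_{x\in F}\|\delta_x\|^2_{\mathscr{H}(K)}$.
   Context: $\delta_x$ denotes the function on $X$ equal to $1$ at $x$ and $0$ elsewhere. $\mathscr{H}(K)$ is the reproducing kernel Hilbert space of $K$: the completion of the span of $\{K(\cdot,x)\}$ with $\langle K(\cdot,x),K(\cdot,y)\rangle=K(x,y)$, a space of functions on $X$ with $\langle K(\cdot,x),h\rangle=h(x)$. *)

(* Defs.v *)
From HB Require Import structures.
From mathcomp Require Import all_boot all_order all_algebra.
From mathcomp Require Import complex.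
From mathcomp Require Import boolp reals.
Set Implicit Arguments. Unset Strict Implicit. Unset Printing Implicit Defensive.
Import Order.TTheory GRing.Theory Num.Theory.
Local Open Scope ring_scope.
Local Open Scope complex_scope.

Definition pos_def_kernel (R : realType) (X : Type) (K : X -> X -> R[i]) :=
  forall (n : nat) (x : 'I_n -> X) (c : 'I_n -> R[i]),
    0 <= \sum_(i < n) \sum_(j < n) (c i)^* * c j * K (x i) (x j).

Definition delta (R : realType) (X : Type) (x : X) : X -> R[i] :=
  fun y => if pselect (y = x) then 1 else 0.

Definition ksec (R : realType) (X : Type) (K : X -> X -> R[i]) (x : X) : X -> R[i] :=
  fun y => K y x.

(* Such a structure exists and is
   unique by Moore--Aronszajn; the theorem is stated for any such structure. *)
Record RKHS (R : realType) (X : Type) (K : X -> X -> R[i]) := {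
  hmem : (X -> R[i]) -> Prop;
  hip : (X -> R[i]) -> (X -> R[i]) -> R[i];
  mem_ksec : forall x, hmem (ksec K x);
  mem_add : forall f g, hmem f -> hmem g -> hmem (fun y => f y + g y);
  mem_scale : forall (a : R[i]) f, hmem f -> hmem (fun y => a * f y);
  ip_conj : forall f g, hmem f -> hmem g -> hip f g = (hip g f)^*;
  ip_linear : forall (a : R[i]) f g h, hmem f -> hmem g -> hmem h ->
     hip f (fun y => a * g y + h y) = a * hip f g + hip f h;
  ip_ge0 : forall f, hmem f -> 0 <= hip f f;
  ip_eq0 : forall f, hmem f -> hip f f = 0 -> forall y, f y = 0;
  reproducing : forall x h, hmem h -> hip (ksec K x) h = h x;
  complete : forall u : nat -> (X -> R[i]), (forall n, hmem (u n)) ->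
     (forall e : R[i], 0 < e -> exists N : nat, forall m n : nat, (N <= m)%N -> (N <= n)%N ->
        hip (fun y => u m y - u n y) (fun y => u m y - u n y) < e) ->
     exists h, hmem h /\
       (forall e : R[i], 0 < e -> exists N : nat, forall n : nat, (N <= n)%N ->
          hip (fun y => u n y - h y) (fun y => u n y - h y) < e);
  span_dense : forall h, hmem h -> forall e : R[i], 0 < e ->
     exists (n : nat) (x : 'I_n -> X) (a : 'I_n -> R[i]),
       let g := fun y => \sum_(i < n) a i * K y (x i) in
       hip (fun y => h y - g y) (fun y => h y - g y) < e
}.

(* The Gram matrix K_F = (K(x,y))_{x,y in F}, for F enumerated injectively
   by f : 'I_n -> X. *)
Definition gram (R : realType) (X : Type) (K : X -> X -> R[i]) (n : nat)
  (f : 'I_n -> X) : 'M[R[i]]_n := \matrix_(i, j) K (f i) (f j).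

(* Main.v *)
Require Import Defs.
From HB Require Import structures.
From mathcomp Require Import all_boot all_order all_algebra.
From mathcomp Require Import ring.
From mathcomp Require Import complex.
From mathcomp Require Import boolp reals.
Import Order.TTheory GRing.Theory Num.Theory.
Local Open Scope ring_scope.
Local Open Scope complex_scope.

Lemma conjcM (R : realType) (x y : R[i]) : conjc (x * y) = conjc x * conjc y.
Proof. exact: rmorphM. Qed.
Lemma conjcD (R : realType) (x y : R[i]) : conjc (x + y) = conjc x + conjc y.
Proof. exact: rmorphD. Qed.
Lemma conjcN (R : realType) (x : R[i]) : conjc (- x) = - conjc x.
Proof. exact: rmorphN. Qed.
Lemma conjc_sum (R : realType) n (F : 'I_n -> R[i]) :
  conjc (\sum_(i < n) F i) = \sum_(i < n) conjc (F i).
Proof. exact: rmorph_sum. Qed.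

Lemma conjcK' (R : realType) (x : R[i]) : conjc (conjc x) = x.
Proof. by case: x => a b /=; rewrite opprK. Qed.

Section Hilb.
Context {R : realType} {X : Type} {K : X -> X -> R[i]} {H : RKHS K}.
Local Notation hm := (hmem H).
Local Notation ip := (hip H).

Lemma mem0 {g} : hm g -> hm (fun _ => 0).
Proof.
move=> hg; suff -> : (fun _ : X => 0 : R[i]) = (fun y => 0 * g y).
  exact: mem_scale.
by apply: funext => y; rewrite mul0r.
Qed.

Lemma ip0r {f g} : hm f -> hm g -> ip f (fun _ => 0) = 0.
Proof.
move=> hf hg; have hz := mem0 hg.
have := ip_linear 1 hf hz hz.
have -> : (fun y : X => 1 * 0 + 0 : R[i]) = (fun _ => 0).
  by apply: funext => y; rewrite mulr0 addr0.
by rewrite mul1r -{1}[ip f _]add0r => /addIr <-.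
Qed.

Lemma ipZr {f g} a : hm f -> hm g -> ip f (fun y => a * g y) = a * ip f g.
Proof.
move=> hf hg.
have -> : (fun y => a * g y) = (fun y => a * g y + 0).
  by apply: funext => y; rewrite addr0.
have hz := mem0 hg.
by rewrite ip_linear // (ip0r hf hg) addr0.
Qed.

Lemma ipDr {f g h} : hm f -> hm g -> hm h ->
  ip f (fun y => g y + h y) = ip f g + ip f h.
Proof.
move=> hf hg hh.
have -> : (fun y => g y + h y) = (fun y => 1 * g y + h y).
  by apply: funext => y; rewrite mul1r.
by rewrite ip_linear // mul1r.
Qed.

Lemma ipZl {f g} a : hm f -> hm g -> ip (fun y => a * f y) g = conjc a * ip f g.
Proof.
move=> hf hg; rewrite ip_conj //; last exact: mem_scale.
by rewrite ipZr // (ip_conj hf hg) rmorphM.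
Qed.

Lemma ipDl {f g h} : hm f -> hm g -> hm h ->
  ip (fun y => f y + g y) h = ip f h + ip g h.
Proof.
move=> hf hg hh; rewrite ip_conj //; last exact: mem_add.
by rewrite ipDr // (ip_conj hf hh) (ip_conj hg hh) rmorphD.
Qed.

Lemma mem_sum {m} (a : 'I_m -> R[i]) (g : 'I_m -> X -> R[i]) :
  hm (fun _ => 0) -> (forall i, hm (g i)) ->
  hm (fun y => \sum_(i < m) a i * g i y).
Proof.
move=> h0; elim: m a g => [|m IH] a g hg.
  have -> : (fun y => \sum_(i < 0) a i * g i y) = (fun _ => 0).
    by apply: funext => y; rewrite big_ord0.
  done.
have -> : (fun y => \sum_(i < m.+1) a i * g i y) =
   (fun y => \sum_(i < m) a (widen_ord (leqnSn m) i) * g (widen_ord (leqnSn m) i) y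
             + a ord_max * g ord_max y).
  by apply: funext => y; rewrite big_ord_recr.
apply: mem_add; first exact: IH.
exact: mem_scale.
Qed.

Lemma ip_sumr {f m} (a : 'I_m -> R[i]) (g : 'I_m -> X -> R[i]) :
  hm f -> (forall i, hm (g i)) ->
  ip f (fun y => \sum_(i < m) a i * g i y) = \sum_(i < m) a i * ip f (g i).
Proof.
move=> hf; have h0 := mem0 hf.
elim: m a g => [|m IH] a g hg.
  have -> : (fun y => \sum_(i < 0) a i * g i y) = (fun _ => 0).
    by apply: funext => y; rewrite big_ord0.
  by rewrite big_ord0 (ip0r hf hf).
have -> : (fun y => \sum_(i < m.+1) a i * g i y) =
   (fun y => \sum_(i < m) a (widen_ord (leqnSn m) i) * g (widen_ord (leqnSn m) i) y
             + a ord_max * g ord_max y).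
  by apply: funext => y; rewrite big_ord_recr.
rewrite ipDr //; first last.
- exact: mem_scale.
- exact: mem_sum.
by rewrite IH // ipZr // big_ord_recr.
Qed.

End Hilb.

Lemma ge0_conj (R : realType) (x : R[i]) : 0 <= x -> conjc x = x.
Proof. by case: x => a b /= /ger0_Im /= ->; rewrite oppr0. Qed.

Lemma conjc_eq0 (R : realType) (x : R[i]) : (conjc x == 0) = (x == 0).
Proof.
apply/eqP/eqP => [e|->]; last by rewrite rmorph0.
by rewrite -[x]conjcK e rmorph0.
Qed.

Theorem lemma8p1 (R : realType) (X : Type) (K : X -> X -> R[i])
  (HK : pos_def_kernel K) (H : RKHS K)
  (Hdelta : forall x : X, hmem H (delta R x))
  (n : nat) (n_gt0 : (0 < n)%N) (f : 'I_n -> X) (f_inj : injective f)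
  (lambda : R[i]) (Hlambda : eigenvalue (gram K f) lambda) :
  1 <= lambda * \sum_(i < n) hip H (delta R (f i)) (delta R (f i)).
Proof.
move/eigenvalueP: Hlambda => [v Hv v0].
have Hev j : \sum_i v 0 i * K (f i) (f j) = lambda * v 0 j.
  have := congr1 (fun M : 'rV[R[i]]_n => M 0 j) Hv; rewrite !mxE => <-.
  by apply: eq_bigr => i _; rewrite mxE.
have herm x y : K x y = conjc (K y x).
  have := reproducing x (mem_ksec H y); rewrite /ksec => <-.
  by rewrite ip_conj ?reproducing //; apply: mem_ksec.
have dE i j : delta R (f j) (f i) = (i == j)%:R.
  rewrite /delta; case: pselect => [e|ne] /=.
    by move/f_inj: e => ->; rewrite eqxx.
  by case: eqP ne => // -> .
set c := fun i => conjc (v 0 i).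
set h := fun y => \sum_(i < n) c i * ksec K (f i) y.
have hz : hmem H (fun _ => 0) := mem0 (mem_ksec H (f (Ordinal n_gt0))).
have hh : hmem H h by apply: mem_sum => // i; apply: mem_ksec.
have hx j : h (f j) = conjc lambda * c j.
  rewrite /h /ksec (eq_bigr (fun i => conjc (v 0 i * K (f i) (f j)))); last first.
    by move=> i _; rewrite (herm (f j) (f i)) conjcM.
  by rewrite -conjc_sum Hev conjcM.
have hd j : hip H (delta R (f j)) h = c j.
  rewrite /h ip_sumr //; last by move=> i; apply: mem_ksec.
  rewrite (bigD1 j) //= big1 ?addr0.
    by rewrite ip_conj ?reproducing ?dE ?eqxx ?rmorph1 ?mulr1 //; apply: mem_ksec.
  move=> i /negbTE ne.
  by rewrite ip_conj ?reproducing ?dE ?ne ?rmorph0 ?mulr0 //; apply: mem_ksec.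
have hhd j : hip H h (delta R (f j)) = conjc (c j).
  by rewrite ip_conj // hd.
set C := \sum_i c i * conjc (c i).
have hN : hip H h h = lambda * C.
  rewrite {2}/h ip_sumr //; last by move=> i; apply: mem_ksec.
  rewrite /C mulr_sumr; apply: eq_bigr => i _.
  rewrite ip_conj ?reproducing //; last by apply: mem_ksec.
  rewrite hx conjcM conjcK'; ring.
set P := fun j => hip H (delta R (f j)) (delta R (f j)).
have Pgt0 j : 0 < P j.
  rewrite lt_def ip_ge0 // andbT; apply/eqP => e.
  have := ip_eq0 (Hdelta (f j)) e (f j).
  by rewrite dE eqxx => /eqP; rewrite oner_eq0.
set D := \sum_j P j.
have j0 : 'I_n := Ordinal n_gt0.
have Dgt0 : 0 < D.
  rewrite lt_def sumr_ge0 ?andbT; last by move=> i _; apply: ltW.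
  apply/eqP => /psumr_eq0P H0.
  by have := H0 (fun i _ => ltW (Pgt0 i)) j0 isT; move/eqP; rewrite gt_eqF.
have [j1 vj1] : exists j, v 0 j != 0.
  apply/existsP; apply: contraR v0 => /existsPn nv.
  by apply/eqP/rowP => j; rewrite mxE; apply/eqP; move: (nv j); rewrite negbK.
have cge0 i : 0 <= c i * conjc (c i) by apply: mulcJ_ge0.
have Cgt0 : 0 < C.
  rewrite lt_def sumr_ge0 ?andbT //; apply/eqP => /psumr_eq0P H0.
  have := H0 (fun i _ => cge0 i) j1 isT; move/eqP.
  by rewrite /c mulf_eq0 !conjc_eq0 orbb (negbTE vj1).
have Cr : conjc C = C by apply: ge0_conj; apply: ltW.
have Dr : conjc D = D by apply: ge0_conj; apply: ltW.
have key j : 0 <= (D * D * lambda * C - 2 * C * D) * (c j * conjc (c j)) + C * C * P j.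
  set a := - (D * conjc (c j)).
  set u := fun y => a * h y + C * delta R (f j) y.
  have hdj := Hdelta (f j).
  have hCd : hmem H (fun y => C * delta R (f j) y) by apply: mem_scale.
  have hu : hmem H u by apply: mem_add => //; apply: mem_scale.
  have := ip_ge0 hu; rewrite {2}/u ip_linear // ipZr //.
  rewrite /u ipDl ?ipZl //; last by apply: mem_scale.
  rewrite ipDl ?ipZl //; last by apply: mem_scale.
  rewrite hN hd hhd Cr /a !conjcN !conjcM conjcK' Dr -/(P j).
  move=> H0; apply: le_trans H0 _; rewrite le_eqVlt; apply/orP; left; apply/eqP.
  rewrite /c; move: (conjc (v 0 j)) (v 0 j) (P j) => p q r; clearbody C D; ring.
have Hsum : 0 <= C * C * D * (lambda * D - 1).
  have -> : C * C * D * (lambda * D - 1) =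
     \sum_j ((D * D * lambda * C - 2 * C * D) * (c j * conjc (c j)) + C * C * P j).
    rewrite big_split /= -!mulr_sumr -/C -/D; clearbody C D; ring.
  by apply: sumr_ge0 => j _; apply: key.
move: Hsum; rewrite pmulr_rge0; last by rewrite !mulr_gt0.
by rewrite subr_ge0.
Qed.
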